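(* Let $N'$ be a positive integer. For every row index $i$ with $2\le i\le N'$, the sum of the entries in the $i$-th row of $A_1^{-1}$ is $0$, and the sum of the entries in the $i$-th row of $A_2^{-1}$ is $0$.
   Context: $(a_{c,d})_{c,d\ge1}$ are the integers defined by: $a_{c,1}=1$ for $c\ge1$; $a_{1,d}=a_{2,d}=0$ for $d\ge2$; $a_{3,2}=-2$ and $a_{3,d}=0$ for $d\ge3$; and $a_{c+2,d+1}=a_{c+1,d+1}-a_{c,d}$ for $c\ge2$, $d\ge1$. $A_1$ and $A_2$ are the $N'\times N'$ matrices with $(i,j)$ entries $a_{2i-1,j}$ and $a_{2i,j}$ respectively; they are lower triangular with all diagonal entries nonzero, hence invertible. *)

(* Defs.v *)
From HB Require Import structures.
From mathcomp Require Import all_boot all_order all_algebra.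
Set Implicit Arguments. Unset Strict Implicit. Unset Printing Implicit Defensive.
Import Order.TTheory GRing.Theory Num.Theory.
Local Open Scope ring_scope.

(* acoef c d = a_{c,d} for c, d >= 1 (1-indexed as in the paper);
   values at c = 0 or d = 0 are junk (0) and never used. *)
Fixpoint acoef (c d : nat) {struct c} : int :=
  match c with
  | 0 => 0
  | 1 => if d == 1%N then 1 else 0
  | 2 => if d == 1%N then 1 else 0
  | 3 => if d == 1%N then 1 else if d == 2%N then -2 else 0
  | S ((S ((S (S k)) as c2)) as c1) =>
      match d with
      | 0 => 0
      | 1 => 1
      | S d' => acoef c1 d - acoef c2 d'
      end
  end.

(* A_1 and A_2 (0-indexed: row i, column j correspond to paper's i+1, j+1),
   viewed over the rationals so that the inverse makes sense. *)
Definition A1 (N : nat) : 'M[rat]_N :=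
  \matrix_(i < N, j < N) (acoef (2 * i.+1 - 1) j.+1)%:~R.
Definition A2 (N : nat) : 'M[rat]_N :=
  \matrix_(i < N, j < N) (acoef (2 * i.+1) j.+1)%:~R.

(* Main.v *)
Require Import Defs.
From HB Require Import structures.
From mathcomp Require Import all_boot all_order all_algebra.
From mathcomp Require Import zify ring.
Import GRing.Theory Num.Theory.
Local Open Scope ring_scope.

Lemma acoef_rec c d : acoef c.+4 d.+2 = acoef c.+3 d.+2 - acoef c.+2 d.+1.
Proof. by []. Qed.

Lemma acoef_one c : acoef c.+1 1 = 1.
Proof. by case: c => [|[|[|c]]]. Qed.

Lemma acoef_zero_aux n : forall c d, (c <= n)%N -> (c.+1 < d.*2)%N -> acoef c d = 0.
Proof.
elim: n => [|n IH] c d.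
  by rewrite leqn0 => /eqP ->.
case: c => [|[|[|[|c]]]] hc hd //.
- by case: d hd => [|[|d]].
- by case: d hd => [|[|d]].
- by case: d hd => [|[|[|d]]].
case: d hd => [|[|d]] hd //.
rewrite acoef_rec !IH //; move: hc hd; rewrite -!muln2; lia.
Qed.

Lemma acoef_zero c d : (c.+1 < d.*2)%N -> acoef c d = 0.
Proof. exact: (@acoef_zero_aux c). Qed.

Lemma acoef_diag k :
  acoef (k.*2.+3) k.+2 = (-1) ^+ k.+1 * 2 /\
  acoef (k.*2.+2) k.+1 = (-1) ^+ k * (k.*2.+1)%:R.
Proof.
elim: k => [|k [IH1 IH2]]; first by split; rewrite ?expr1 ?expr0 ?mulN1r ?mul1r.
have E1 : acoef (k.+1).*2.+3 k.+3 = (-1) ^+ k.+2 * 2.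
  rewrite doubleS (acoef_rec (k.*2.+1) k.+1) acoef_zero; last by rewrite -!muln2; lia.
  by rewrite IH1 sub0r [in RHS]exprS mulN1r mulNr.
split => //.
rewrite doubleS (acoef_rec (k.*2) k) IH1 IH2 exprS mulN1r.
have -> : k.*2.+3 = (k.*2.+1 + 2)%N by rewrite addn2.
rewrite natrD; ring.
Qed.

Lemma rowsum_inv n (A : 'M[rat]_n.+1) (i : 'I_n.+1) :
  is_trig_mx A -> (forall k, A k k != 0) -> (forall k, A k ord0 = 1) ->
  i != ord0 -> \sum_(j < n.+1) invmx A i j = 0.
Proof.
move=> Ht Hd H0 Hi.
have U : A \in unitmx.
  by rewrite unitmxE unitfE det_trig //; apply/prodf_neq0 => k _.
have := congr1 (fun M : 'M[rat]_n.+1 => M i ord0) (mulVmx U).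
rewrite !mxE (negbTE Hi) mulr0n => E; rewrite -[RHS]E.
by apply: eq_bigr => j _; rewrite H0 mulr1.
Qed.

Lemma e1 (k : nat) : (2 * k.+1 - 1 = k.*2.+1)%N.
Proof. rewrite -muln2; lia. Qed.
Lemma e2 (k : nat) : (2 * k.+1 = k.*2.+2)%N.
Proof. rewrite -muln2; lia. Qed.

Theorem corollary3p6 (N : nat) (hN : (0 < N)%N) (i : 'I_N) (hi : (1 <= i)%N) :
  \sum_(j < N) invmx (A1 N) i j = 0 /\ \sum_(j < N) invmx (A2 N) i j = 0.
Proof.
case: N hN i hi => [|n] // _ i hi.
have Hi : i != ord0 by rewrite -val_eqE /= -lt0n.
split; apply: rowsum_inv => //.
- apply/forallP=> a; apply/forallP=> b; apply/implyP=> lt.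
  rewrite mxE e1 acoef_zero //; move: lt; rewrite -!muln2; lia.
- move=> [[|k] hk]; rewrite mxE e1; first by [].
  rewrite doubleS (acoef_diag k).1 intr_eq0 mulf_neq0 // signr_eq0 //.
- by move=> k; rewrite mxE e1 acoef_one.
- apply/forallP=> a; apply/forallP=> b; apply/implyP=> lt.
  rewrite mxE e2 acoef_zero //; move: lt; rewrite -!muln2; lia.
- move=> [k hk]; rewrite mxE e2.
  rewrite (acoef_diag k).2 intr_eq0 mulf_neq0 // ?signr_eq0 // pnatr_eq0 //.
- by move=> k; rewrite mxE e2 acoef_one.
Qed.
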